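(* Let $M$ be a sharp toric monoid and let $N\subseteq M$ be a face. Then the following conditions are equivalent: (a) $N$ splits off, i.e. there is a face $K\subseteq M$ such that the natural map $N\oplus K\to M$ is an isomorphism; (b) the ideal $(N^+)=N^++M$ of $M$ is prime and $\operatorname{ht}((N^+))\ge \operatorname{rk}(N)$; (c) the ideal $(N^+)$ is prime and the face $K=M\setminus (N^+)$ satisfies $\operatorname{rk}(K)+\operatorname{rk}(N)\le \operatorname{rk}(M)$.
   Context: Monoids are commutative. For a monoid $M$: $M^\times$ is its group of units, $M^{gp}$ its Grothendieck group, $\operatorname{rk}(M)=\dim_{\mathbb Q}(M^{gp}\otimes\mathbb Q)$. $M$ is sharp if $M^\times=\{0\}$. A toric monoid is a fine (finitely generated, integral) saturated monoid whose Grothendieck group is torsion free. For a face $N$, $N^+=N\setminus N^\times$. An ideal of $M$ is a subset $I$ with $I+M\subseteq I$; it is prime if $M\setminus I$ is a submonoid (then $M\setminus I$ is a face). For a toric monoid and a prime ideal $\mathfrak p$ with face $F=M\setminus\mathfrak p$, the height is $\operatorname{ht}(\mathfrak p)=\operatorname{rk}(M)-\operatorname{rk}(F)$. *)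

(* Defs.v *)
(* Monoids are modelled as submonoids of Q^n = 'rV[rat]_n. *)
From HB Require Import structures.
From mathcomp Require Import all_boot all_order all_algebra.
Set Implicit Arguments. Unset Strict Implicit. Unset Printing Implicit Defensive.
Import GRing.Theory.
Local Open Scope ring_scope.

Section MonoidDefs.
Variable n : nat.
Local Notation V := 'rV[rat]_n.

Definition subset_of (A B : V -> Prop) := forall v, A v -> B v.

Definition submonoid (M : V -> Prop) :=
  M 0 /\ (forall a b, M a -> M b -> M (a + b)).

Definition nat_span (s : seq V) (v : V) : Prop :=
  exists c : nat -> nat, v = \sum_(i < size s) (s`_i *+ c i).

(* finitely generated (integrality is automatic inside V) *)
Definition fine (M : V -> Prop) :=
  exists s : seq V, forall v, M v <-> nat_span s v.

(* Grothendieck group of M, realised inside V *)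
Definition gp (M : V -> Prop) (v : V) : Prop :=
  exists a b, M a /\ M b /\ v = a - b.

Definition saturated (M : V -> Prop) :=
  forall v, gp M v -> forall k : nat, (0 < k)%N -> M (v *+ k) -> M v.

(* toric monoid: fine and saturated; M^gp is a f.g. subgroup of Q^n,
   hence automatically torsion free *)
Definition toric (M : V -> Prop) := fine M /\ saturated M.

Definition units (M : V -> Prop) (v : V) : Prop := M v /\ M (- v).

Definition sharp (M : V -> Prop) := forall v, units M v -> v = 0.

Definition face (M N : V -> Prop) :=
  subset_of N M /\ submonoid N /\
  (forall a b, M a -> M b -> N (a + b) -> N a /\ N b).

Definition plus_part (N : V -> Prop) (v : V) : Prop := N v /\ ~ units N v.

Definition gen_ideal (M N : V -> Prop) (v : V) : Prop :=
  exists a b, plus_part N a /\ M b /\ v = a + b.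

Definition ideal (M I : V -> Prop) :=
  subset_of I M /\ (forall a b, I a -> M b -> I (a + b)).

Definition compl (M I : V -> Prop) (v : V) : Prop := M v /\ ~ I v.

Definition prime_ideal (M I : V -> Prop) :=
  ideal M I /\ submonoid (compl M I).

(* rk(A) = dim_Q (A^gp (x) Q) = dim of the Q-span of A in Q^n;
   rank_is A r  <->  rk(A) = r *)
Definition rank_is (A : V -> Prop) (r : nat) :=
  exists s : seq V, (forall v, v \in s -> A v) /\
    (forall v, A v -> v \in <<s>>%VS) /\ \dim <<s>>%VS = r.

Definition height_is (M P : V -> Prop) (h : nat) :=
  exists rM rF, rank_is M rM /\ rank_is (compl M P) rF /\ h = (rM - rF)%N.

Definition splits_off (M N : V -> Prop) :=
  exists K, face M K /\
    (forall m, M m -> exists a b, N a /\ K b /\ m = a + b) /\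
    (forall a b a' b', N a -> K b -> N a' -> K b' ->
        a + b = a' + b' -> a = a' /\ b = b').

End MonoidDefs.

(* Main.v *)
Require Import Defs.
From mathcomp Require Import all_boot all_order all_algebra.
From Stdlib Require Import ClassicalEpsilon Classical.
From mathcomp Require Import zify.
Import GRing.Theory Num.Theory.
Local Open Scope ring_scope.

Definition pb (P : Prop) : bool := if excluded_middle_informative P then true else false.
Lemma pbP (P : Prop) : reflect P (pb P).
Proof. rewrite /pb; case: excluded_middle_informative => h; by constructor. Qed.

Lemma count_lt (T : eqType) (a b : pred T) (s : seq T) y :
  subpred a b -> y \in s -> b y -> ~~ a y -> (count a s < count b s)%N.
Proof.
move=> sab; elim: s => //= z s IH; rewrite in_cons => /orP [/eqP<-|ys] bY nay.
  rewrite bY (negbTE nay) /= add0n add1n ltnS; exact: sub_count.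
have := IH ys bY nay; have := sab z; case: (a z); case: (b z) => //= H; try lia.

Qed.

Lemma descent (T : eqType) (s : seq T) (P : T -> Prop) (R : T -> T -> Prop) :
  (forall x y z, R x y -> R y z -> R x z) -> (forall x, ~ R x x) ->
  (forall x, P x -> x \in s) -> (forall x, P x -> exists y, P y /\ R x y) ->
  forall x, ~ P x.
Proof.
move=> Rt Ri Ps Pd.
pose c x := count (fun y => pb (R x y)) s.
have lt : forall x y, P y -> R x y -> (c y < c x)%N.
  move=> x y Py Rxy; apply: (@count_lt _ _ _ _ y).
  - by move=> z /pbP Ryz; apply/pbP; apply: Rt Rxy Ryz.
  - exact: Ps.
  - exact/pbP.
  - by apply/pbP; apply: Ri.
suff H : forall m x, P x -> (c x <= m)%N -> False.
  by move=> x Px; exact: (H _ x Px (leqnn _)).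
elim=> [|m IH] x Px.
  have [y [Py Rxy]] := Pd x Px; have := lt _ _ Py Rxy; lia.
have [y [Py Rxy]] := Pd x Px; have := lt _ _ Py Rxy => h1 h2.
apply: (IH y Py); lia.
Qed.

Lemma maxQ (Q : nat -> Prop) b : (exists d, Q d) -> (forall d, Q d -> (d <= b)%N) ->
  exists d, Q d /\ forall d', Q d' -> (d' <= d)%N.
Proof.
elim: b => [|b IH] [d Qd] Hb.
  exists d; split=> // d' /Hb; lia.
case: (classic (Q b.+1)) => Qb.
  by exists b.+1; split.
apply: IH; first by exists d.
move=> d' Qd'; have := Hb _ Qd'.
have : d' != b.+1 by apply/eqP => e; rewrite e in Qd'.
lia.
Qed.

Section R.
Variable n : nat.
Local Notation V := 'rV[rat]_n.

Lemma rank_ex (A : V -> Prop) : exists r, rank_is A r.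
Proof.
pose Q d := exists s : seq V, (forall v, v \in s -> A v) /\ \dim <<s>> = d.
have [d [[s [sA sd]] dmax]] : exists d, Q d /\ forall d', Q d' -> (d' <= d)%N.
  apply: (@maxQ _ (\dim (fullv : {vspace V}))).
    by exists 0%N, [::]; split => //; rewrite span_nil dimv0.
  by move=> d [s [_ <-]]; apply: dimvS; apply: subvf.
exists d, s; split=> //; split=> // v Av.
have Qv : Q (\dim <<v :: s>>).
  exists (v :: s); split=> // w; rewrite in_cons => /orP [/eqP->|]; [done| exact: sA].
have sub : (<<s>> <= <<v :: s>>)%VS.
  by rewrite span_cons addvC addvSl.
have : (<<s>> == <<v :: s>>)%VS by rewrite eqEdim sub sd; exact: dmax.
by move/eqP => ->; apply: memv_span; rewrite mem_head.
Qed.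

Lemma rank_mono (A B : V -> Prop) a b : (forall v, A v -> B v) ->
  rank_is A a -> rank_is B b -> (a <= b)%N.
Proof.
move=> AB [sA [HA1 [HA2 <-]]] [sB [HB1 [HB2 <-]]].
apply: dimvS; apply/span_subvP => v /HA1 /AB /HB2 //.
Qed.

Lemma sm_muln (A : V -> Prop) x k : submonoid A -> A x -> A (x *+ k).
Proof.
move=> [A0 AD] Ax; elim: k => [|k IH]; first by rewrite mulr0n.
by rewrite mulrS; apply: AD.
Qed.

Lemma sm_sum (A : V -> Prop) m (F : 'I_m -> V) : submonoid A ->
  (forall i, A (F i)) -> A (\sum_(i < m) F i).
Proof.
move=> [A0 AD] HF; apply: big_ind => //; by move=> i _.
Qed.

Lemma rat_split (c : rat) : exists d : nat, (0 < d)%N /\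
  exists p m : nat, c * d%:R = p%:R - m%:R.
Proof.
exists `|denq c|%N; split.
  have := denq_gt0 c; lia.
have e : ((`|denq c|%N)%:R : rat) = (denq c)%:~R.
  by rewrite -[in RHS](@gez0_abs (denq c)) ?ltW ?denq_gt0 //.
rewrite e -numqE; case: (numq c) => [p|m].
  by exists p, 0%N; rewrite subr0.
by exists 0%N, m.+1; rewrite NegzE sub0r mulrNz.
Qed.

Lemma span_gp (A : V -> Prop) (s : seq V) v : submonoid A ->
  (forall x, x \in s -> A x) -> v \in <<s>>%VS ->
  exists k, (0 < k)%N /\ gp A (v *+ k).
Proof.
move=> smA; elim: s v => [|x s IH] v sA.
  rewrite span_nil memv0 => /eqP ->; exists 1%N; split => //.
  by exists 0, 0; rewrite mul0rn subr0; case: smA.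
rewrite span_cons => /memv_addP [u /vlineP [c ->] [w ws ->]].
have sA' : forall y, y \in s -> A y by move=> y ys; apply: sA; rewrite in_cons ys orbT.
have [k [k0 [a [b [Aa [Ab wk]]]]]] := IH w sA' ws.
have Ax : A x by apply: sA; rewrite mem_head.
have [d [d0 [p [m cd]]]] := rat_split c.
exists (k * d)%N; split; first by rewrite muln_gt0 k0.
exists ((x *+ p) *+ k + a *+ d), ((x *+ m) *+ k + b *+ d); split; last split.
- by apply: smA.2; apply: sm_muln => //; apply: sm_muln.
- by apply: smA.2; apply: sm_muln => //; apply: sm_muln.
rewrite mulrnDl [in X in X + _]mulnC !mulrnA wk.
have -> : (c *: x) *+ d = x *+ p - x *+ m.
  by rewrite -scaler_nat scalerA mulrC cd scalerBl !scaler_nat.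
by rewrite !mulrnBl opprD addrACA.
Qed.

Lemma cap0 (A B : V -> Prop) (sA sB : seq V) : submonoid A -> submonoid B ->
  (forall a b a' b', A a -> B b -> A a' -> B b' -> a + b = a' + b' -> a = a') ->
  (forall x, x \in sA -> A x) -> (forall x, x \in sB -> B x) ->
  (<<sA>> :&: <<sB>> = 0)%VS.
Proof.
move=> smA smB U HA HB; apply/eqP; rewrite -subv0; apply/subvP => v /memv_capP [vA vB].
have [k1 [k10 [a [b [Aa [Ab e1]]]]]] := @span_gp A sA v smA HA vA.
have [k2 [k20 [c [f [Bc [Bf e2]]]]]] := @span_gp B sB v smB HB vB.
have e : a *+ k2 + f *+ k1 = b *+ k2 + c *+ k1.
  have : (a - b) *+ k2 = (c - f) *+ k1 by rewrite -e1 -e2 -!mulrnA mulnC.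
  rewrite !mulrnBl => /eqP; rewrite subr_eq => /eqP ->.
  by rewrite addrAC subrK addrC.
have := U _ _ _ _ (sm_muln _ _ k2 smA Aa) (sm_muln _ _ k1 smB Bf) (sm_muln _ _ k2 smA Ab)
  (sm_muln _ _ k1 smB Bc) e.
move=> /eqP; rewrite -subr_eq0 -mulrnBl -e1 -mulrnA -scaler_nat scaler_eq0.
rewrite pnatr_eq0 muln_eq0 memv0 => /orP [/orP []|] //.
  by move/eqP => h; rewrite h in k10.
by move/eqP => h; rewrite h in k20.
Qed.

End R.
Set Implicit Arguments. Unset Strict Implicit.

Section M.
Variable n : nat.
Local Notation V := 'rV[rat]_n.

Lemma fine_sm (M : V -> Prop) : fine M -> submonoid M.
Proof.
move=> [s Hs]; split.
  by apply/Hs; exists (fun _ => 0%N); rewrite big1 // => i _; rewrite mulr0n.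
move=> a b /Hs [c ->] /Hs [d ->]; apply/Hs; exists (fun i => c i + d i)%N.
by rewrite -big_split /=; apply: eq_bigr => i _; rewrite mulrnDr.
Qed.

Lemma fine_gen (M : V -> Prop) (s : seq V) : (forall v, M v <-> nat_span s v) ->
  forall g, g \in s -> M g.
Proof.
move=> Hs g gs; apply/Hs.
exists (fun j => (j == index g s)%N).
have ilt : (index g s < size s)%N by rewrite index_mem.
rewrite (bigD1 (Ordinal ilt)) //= big1 ?addr0 ?eqxx ?mulr1n ?nth_index //.
by move=> j nj; rewrite (_ : (nat_of_ord j == index g s) = false) ?mulr0n //;
  apply/negbTE; apply: contra nj => /eqP h; apply/eqP; apply: val_inj.
Qed.

Lemma sharp0 (M : V -> Prop) a b : sharp M -> M a -> M b -> a + b = 0 -> a = 0.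
Proof.
move=> sh Ma Mb e; apply: sh; split => //.
by have -> : - a = b by apply/eqP; rewrite eq_sym -subr_eq0 opprK addrC e.
Qed.

Lemma pp_ne0 (N : V -> Prop) a : submonoid N -> plus_part N a -> a <> 0.
Proof. by move=> [N0 _] [Na nu] e; apply: nu; rewrite e; split => //; rewrite oppr0. Qed.

End M.
Unset Implicit Arguments.

Theorem lemma2p1 (n : nat) (M N : 'rV[rat]_n -> Prop) :
  toric M -> sharp M -> face M N ->
  (splits_off M N <->
   (prime_ideal M (gen_ideal M N) /\
    forall h rN, height_is M (gen_ideal M N) h -> rank_is N rN -> (rN <= h)%N)) /\
  ((prime_ideal M (gen_ideal M N) /\
    forall h rN, height_is M (gen_ideal M N) h -> rank_is N rN -> (rN <= h)%N) <->
   (prime_ideal M (gen_ideal M N) /\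
    forall rK rN rM, rank_is (compl M (gen_ideal M N)) rK -> rank_is N rN ->
      rank_is M rM -> (rK + rN <= rM)%N)).
Proof.
move=> [fM satM] shM [NM [smN Nface]].
have smM := fine_sm fM.
split; last first.
  split=> [[pr hb]|[pr hc]]; split=> //.
    move=> rK rN rM HK HN HM.
    have := hb (rM - rK)%N rN (ex_intro _ rM (ex_intro _ rK (conj HM (conj HK erefl)))) HN.
    have := @rank_mono _ _ _ _ _ (fun v (h : compl M (gen_ideal M N) v) => h.1) HK HM.
    lia.
  move=> h rN [rM [rF [HM [HF ->]]]] HN.
  have := hc _ _ _ HF HN HM; lia.
split.
-
  move=> [K [[KM [smK Kface]] [ex uniq]]].
  have Kchar : forall v, compl M (gen_ideal M N) v <-> K v.
    move=> v; split.
      move=> [Mv nIv]; have [a [b [Na [Kb e]]]] := ex v Mv.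
      case: (eqVneq a 0) => [a0|an0].
        by rewrite e a0 add0r.
      exfalso; apply: nIv; exists a, b; split; last by split => //; apply: KM.
      split => // [[_ Nma]]; move: an0; rewrite (shM a) ?eqxx //; split; exact: NM.
    move=> Kv; split; first exact: KM.
    move=> [a [b [ppa [Mb e]]]].
    have [a1 [k1 [Na1 [Kk1 eb]]]] := ex b Mb.
    have := uniq (a + a1) k1 0 v (smN.2 _ _ ppa.1 Na1) Kk1 smN.1 Kv.
    rewrite add0r e eb addrA => /(_ erefl) [h _].
    apply: (pp_ne0 smN ppa); apply: (sharp0 shM _ _ h); apply: NM => //; exact: ppa.1.
  have smC : submonoid (compl M (gen_ideal M N)).
    split; first by apply/Kchar; exact: smK.1.
    by move=> a b /Kchar Ka /Kchar Kb; apply/Kchar; apply: smK.2.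
  split.
    split => //; split.
      move=> v [a [b [ppa [Mb ->]]]]; apply: smM.2 => //; apply: NM; exact: ppa.1.
    move=> v b [x [y [ppx [My ->]]]] Mb; exists x, (y + b); split => //; split.
      exact: smM.2.
    by rewrite addrA.
  move=> h rN [rM [rF [[sM [HM1 [HM2 HMd]]] [[sF [HF1 [HF2 HFd]]] ->]]]] [sN [HN1 [HN2 HNd]]].
  have c0 : (<<sN>> :&: <<sF>> = 0)%VS.
    apply: (@cap0 _ N (compl M (gen_ideal M N))) => //.
    move=> a b a' b' Na Cb Na' Cb' e.
    by have [] := uniq a b a' b' Na (proj1 (Kchar b) Cb) Na' (proj1 (Kchar b') Cb') e.
  have := dimv_sum_cap <<sN>> <<sF>>; rewrite c0 dimv0 addn0 HNd HFd => e.
  have : (\dim (<<sN>> + <<sF>>) <= \dim <<sM>>)%N.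
    apply: dimvS; rewrite subv_add; apply/andP; split; apply/span_subvP => v vs.
      by apply: HM2; apply: NM; apply: HN1.
    by apply: HM2; have [] := HF1 v vs.
  rewrite e HMd; lia.
-
  move=> [[[IM Iadd] smC] hb].
  set I := gen_ideal M N in IM Iadd smC hb *.
  set K := compl M I in smC hb *.
  have KM : subset_of K M by move=> v [].
  have Kface : forall a b, M a -> M b -> K (a + b) -> K a /\ K b.
    move=> a b Ma Mb [_ nI]; split; split => // Ia; apply: nI.
      exact: Iadd.
    by rewrite addrC; apply: Iadd.
  pose S v := exists a b, N a /\ K b /\ v = a + b.
  have smS : submonoid S.
    split; first by exists 0, 0; rewrite addr0; split; [exact: smN.1| split => //; exact: smC.1].
    move=> u v [a [b [Na [Kb ->]]]] [a' [b' [Na' [Kb' ->]]]].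
    exists (a + a'), (b + b'); split; first exact: smN.2.
    by split; [exact: smC.2|rewrite addrACA].
  have [s Hs] := fM.
  have Ms := fine_gen Hs.
  have genS : forall g, g \in s -> S g.
    move=> g gs; apply: NNPP => nSg.
    pose P g := g \in s /\ ~ S g.
    pose R (g h : 'rV[rat]_n) := exists x, M x /\ x <> 0 /\ g = h + x.
    suff : ~ P g by apply; split.
    have D := @descent _ s P R.
    apply: D.
    - move=> x y z [u [Mu [u0 ->]]] [w [Mw [w0 ->]]]; exists (w + u); split.
        exact: smM.2.
      split; last by rewrite addrA.
      by move=> e; apply: w0; apply: (sharp0 shM _ _ e).
    - by move=> x [u [_ [u0 e]]]; apply: u0; apply/eqP; rewrite -(addrI x (_ : x + 0 = x + u)) ?addr0.
    - by move=> x [].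
    move=> x [xs nSx].
    have Ix : I x.
      apply: NNPP => nIx; apply: nSx; exists 0, x; split; first exact: smN.1.
      by split; [split => //; exact: Ms| rewrite add0r].
    have [a [b [ppa [Mb ex]]]] := Ix.
    have [c ebc] := proj1 (Hs b) Mb.
    case: (classic (exists j : 'I_(size s), c j <> 0%N /\ ~ S s`_j)) => [[j [cj nSj]]|H].
      exists s`_j; split; first by split => //; apply: mem_nth.
      have Mr : M (b - s`_j).
        rewrite ebc (bigD1 j) //= -(prednK (n := c j)); last by lia.
        rewrite mulrS -addrA addrAC subrr add0r.
        rewrite big_mkcond /=.
        apply: smM.2; first by apply: (@sm_muln _ M _ _ smM); apply: Ms; apply: mem_nth.
        apply: (@sm_sum _ M _ _ smM) => i; case: (i != j) => /=; last exact: smM.1.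
        by apply: (@sm_muln _ M _ _ smM); apply: Ms; apply: mem_nth.
      exists (a + (b - s`_j)); split; first by apply: smM.2 => //; apply: NM; exact: ppa.1.
      split.
        move=> e; apply: (pp_ne0 smN ppa); apply: (sharp0 shM _ _ e) => //; apply: NM; exact: ppa.1.
      by rewrite ex addrCA [s`_j + _]addrC subrK.
    exfalso; apply: nSx; rewrite ex.
    have Sb : S b.
      rewrite ebc; apply: (@sm_sum _ S _ _ smS) => i.
      case: (eqVneq (c i) 0%N) => [->|ci]; first by rewrite mulr0n; exact: smS.1.
      apply: (@sm_muln _ S _ _ smS); apply: NNPP => nS; apply: H; exists i; split => //.
      by apply/eqP.
    have [a' [b' [Na' [Kb' ->]]]] := Sb.
    exists (a + a'), b'; split; first by apply: smN.2 => //; exact: ppa.1.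
    by split => //; rewrite addrA.
  have MS : forall m, M m -> S m.
    move=> m /Hs [c ->]; apply: (@sm_sum _ S _ _ smS) => i; apply: (@sm_muln _ S _ _ smS).
    by apply: genS; apply: mem_nth.
  exists K; split; first by split => //; split.
  split; first exact: MS.
  have [rN [sN [HN1 [HN2 HNd]]]] := @rank_ex _ N.
  have [rK [sK [HK1 [HK2 HKd]]]] := @rank_ex _ K.
  have [rM [sM [HM1 [HM2 HMd]]]] := @rank_ex _ M.
  have hNK : (rN <= rM - rK)%N.
    apply: hb => //.
      by exists rM, rK; split; [exists sM| split; [exists sK|]].
    by exists sN.
  have hKM : (rK <= rM)%N.
    by apply: (@rank_mono _ _ _ _ _ KM); [exists sK|exists sM].
  have dsum : (rM <= \dim (<<sN>> + <<sK>>))%N.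
    rewrite -HMd; apply: dimvS; apply/span_subvP => v /HM1 /MS [a [b [Na [Kb ->]]]].
    by apply: memv_add; [apply: HN2| apply: HK2].
  have c0 : (<<sN>> :&: <<sK>> = 0)%VS.
    apply/eqP; rewrite -dimv_eq0; move: (dimv_sum_cap <<sN>> <<sK>>).
    rewrite HNd HKd; move: dsum; lia.
  move=> a b a' b' Na Kb Na' Kb' e.
  have aa : a = a'.
    apply/eqP; rewrite -subr_eq0 -memv0 -c0; apply/memv_capP; split.
      by apply: memvB; apply: HN2.
    have -> : a - a' = b' - b.
      by apply/eqP; rewrite subr_eq addrAC [b' + a']addrC -e addrK.
    by apply: memvB; apply: HK2.
  by split => //; move: e; rewrite aa => /addrI.
Qed.
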